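(* For every integer $r\ge2$, $$\log\mathcal C_r\left(\frac14\right)=\left(\frac14\right)^{r-1}\left(-\frac12\log2+(r-1)\sum_{n=1}^\infty\frac{\lambda(2n)}{n(2n+r-1)2^{2n}}\right).$$
   Context: For an integer $r\ge2$ let $P_r(y)=(1-y)\exp\left(y+\frac{y^2}{2}+\cdots+\frac{y^r}{r}\right)$. The multiple cosine function of Kurokawa–Koyama of order $r\ge2$ is $\mathcal C_r(x)=\prod_{n\ge1,\ n\text{ odd}}\left\{P_r\left(\frac{x}{n/2}\right)P_r\left(-\frac{x}{n/2}\right)^{(-1)^{r-1}}\right\}^{(n/2)^{r-1}}$, interpreted as $\mathcal C_r(x)=\exp\Big(\sum_{n\ge1,\,n\text{ odd}}(n/2)^{r-1}\big[\operatorname{Log}P_r(2x/n)+(-1)^{r-1}\operatorname{Log}P_r(-2x/n)\big]\Big)$, where $\operatorname{Log}P_r(y):=\operatorname{Log}(1-y)+y+\frac{y^2}{2}+\cdots+\frac{y^r}{r}$ with $\operatorname{Log}$ the principal branch. The series converges and defines a holomorphic function on $D=\mathbb C\setminus\big((-\infty,-\tfrac12]\cup[\tfrac12,\infty)\big)$, positive on $(-\tfrac12,\tfrac12)$; $\log\mathcal C_r(x)$ denotes the exponent above (the real logarithm for real $|x|<\tfrac12$). $\lambda(s)=\sum_{n=0}^\infty\frac1{(2n+1)^s}$. *)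

(* Defs.v *)
From Stdlib Require Import Reals.
From Coquelicot Require Import Coquelicot.
Open Scope R_scope.

(* Log P_r(y) := Log(1-y) + y + y^2/2 + ... + y^r/r, for real y < 1
   (where the principal Log coincides with the real ln). *)
Definition LogP (r : nat) (y : R) : R :=
  ln (1 - y) + sum_f_R0 (fun j => y ^ (S j) / INR (S j)) (pred r).

(* log C_r(x) = sum over odd n = 2k+1 of
   (n/2)^(r-1) [Log P_r(2x/n) + (-1)^(r-1) Log P_r(-2x/n)],
   for real x with |x| < 1/2. *)
Definition logC (r : nat) (x : R) : R :=
  Series (fun k : nat =>
    let n := 2 * INR k + 1 in
    (n / 2) ^ (r - 1) *
      (LogP r (2 * x / n) + (-1) ^ (r - 1) * LogP r (- (2 * x / n)))).

Definition lambda (s : nat) : R :=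
  Series (fun m : nat => / (2 * INR m + 1) ^ s).

(* Main.v *)
Require Import Defs.
From Stdlib Require Import Reals Lra Lia.
From Coquelicot Require Import Coquelicot.
Open Scope R_scope.

Lemma dsum (N : nat) (t : R) :
  is_derive (fun t => sum_f_R0 (fun j => t^(S j)/INR (S j)) N) t (sum_f_R0 (fun j => t^j) N).
Proof.
  induction N as [|N IH].
  - simpl. auto_derive. auto. field.
  - simpl sum_f_R0 at 2.
    apply (is_derive_plus (fun t => sum_f_R0 (fun j => t^(S j)/INR (S j)) N) (fun t => t^(S (S N))/INR (S (S N)))).
    exact IH.
    assert (Hc : INR (S (S N)) <> 0) by (apply not_0_INR; lia).
    assert (Hc2 : INR (S (S N)) = INR (S N) + 1) by apply S_INR.
    set (c := INR (S (S N))) in *. clearbody c.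
    auto_derive. trivial. simpl pred. rewrite Hc2 in *. simpl INR in *. field. exact Hc.
Qed.

Lemma R_bound (N : nat) (y : R) : Rabs y <= 1/2 ->
  Rabs (ln (1 - y) + sum_f_R0 (fun j => y^(S j)/INR (S j)) N) <= (1/2)^(S N).
Proof.
  intro Hy.
  assert (HD : forall c, Rabs c <= 1/2 -> derivable_pt_lim
     (fun t => ln (1 - t) + sum_f_R0 (fun j => t^(S j)/INR (S j)) N) c (c^(S N)/(c - 1))).
  { intros c Hc. apply is_derive_Reals.
    assert (Hc1 : 0 < 1 - c) by (apply Rabs_le_between in Hc; lra).
    replace (c^(S N)/(c-1)) with (plus ((-1)/(1-c)) (sum_f_R0 (fun j => c^j) N)).
    apply (is_derive_plus (fun t => ln (1 - t)) (fun t => sum_f_R0 (fun j => t^(S j)/INR (S j)) N)).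
    2: apply dsum.
    auto_derive. exact Hc1. field. lra.
    pose proof (GP_finite c N) as G. rewrite Nat.add_1_r in G.
    simpl pow in G |- *. 
    replace (sum_f_R0 (fun j => c ^ j) N) with ((c * c^N - 1)/(c-1)).
    unfold plus; simpl. field. lra.
    rewrite <- G. field. lra. }
  destruct (MVT_abs (fun t => ln (1 - t) + sum_f_R0 (fun j => t^(S j)/INR (S j)) N) (fun c => c^(S N)/(c - 1)) 0 y) as [c [Hb Hc]].
  { intros c Hc. apply HD. unfold Rmin, Rmax in Hc; destruct (Rle_dec 0 y); apply Rabs_le_between in Hy; apply Rabs_le_between; lra. }
  assert (Hc' : Rabs c <= Rabs y).
  { unfold Rmin, Rmax in Hc; destruct (Rle_dec 0 y); unfold Rabs; destruct (Rcase_abs c); destruct (Rcase_abs y); lra. }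
  assert (E0 : ln (1 - 0) + sum_f_R0 (fun j => 0^(S j)/INR (S j)) N = 0).
  { replace (1 - 0) with 1 by ring. rewrite ln_1. rewrite Rplus_0_l.
    clear. induction N. simpl; field. cbn [sum_f_R0]. rewrite IHN. simpl pow. rewrite Rmult_0_l. unfold Rdiv. ring. }
  rewrite E0, Rminus_0_r, Rminus_0_r in Hb. rewrite Hb.
  assert (Hcc : Rabs c <= 1/2) by lra.
  apply Rabs_le_between in Hcc as Hcb.
  rewrite Rabs_div by lra. rewrite <- RPow_abs.
  assert (H1 : Rabs (c - 1) >= 1/2) by (unfold Rabs; destruct (Rcase_abs (c-1)); lra).
  assert (Hp : Rabs c ^ S N <= (1/2)^(S N)) by (apply pow_incr; split; [apply Rabs_pos|lra]).
  assert (Hp2 : Rabs c ^ S N <= Rabs c ^ N * (1/2)).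
  { simpl. rewrite Rmult_comm. apply Rmult_le_compat_l. apply pow_le, Rabs_pos. lra. }
  assert (Hp3 : Rabs c ^ N <= (1/2)^N) by (apply pow_incr; split; [apply Rabs_pos|lra]).
  assert (0 <= Rabs c ^ N) by (apply pow_le, Rabs_pos).
  assert (0 <= Rabs c ^ S N) by (apply pow_le, Rabs_pos).
  apply Rle_trans with (Rabs c ^ S N / (1/2) * (1/2)).
  - apply Rmult_le_compat; try (apply Rabs_pos); try lra.
    + apply Rmult_le_pos. lra. left; apply Rinv_0_lt_compat. apply Rabs_pos_lt. lra.
    + apply Rmult_le_compat_l. lra. apply Rinv_le_contravar; lra.
  - simpl. field_simplify. simpl in Hp. nra.
Qed.

Lemma log_series (y : R) : Rabs y <= 1/2 ->
  is_series (fun j => y^(S j)/INR (S j)) (- ln (1 - y)).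
Proof.
  intro Hy.
  change (is_lim_seq (sum_n (fun j => y^(S j)/INR (S j))) (- ln (1 - y))).
  apply is_lim_seq_le_le with (u := fun N => - ln (1 - y) - (1/2)^(S N))
    (w := fun N => - ln (1 - y) + (1/2)^(S N)).
  - intro N. rewrite sum_n_Reals. pose proof (R_bound N y Hy) as B.
    apply Rabs_le_between in B. lra.
  - replace (Finite (- ln (1 - y))) with (Finite (- ln (1 - y) - 0)) by (f_equal; ring).
    apply is_lim_seq_minus'. apply is_lim_seq_const.
    apply (is_lim_seq_incr_1 (fun n => (1/2)^n)). apply is_lim_seq_geom. rewrite Rabs_pos_eq; lra.
  - replace (Finite (- ln (1 - y))) with (Finite (- ln (1 - y) + 0)) by (f_equal; ring).
    apply is_lim_seq_plus'. apply is_lim_seq_const.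
    apply (is_lim_seq_incr_1 (fun n => (1/2)^n)). apply is_lim_seq_geom. rewrite Rabs_pos_eq; lra.
Qed.

Lemma even_series (w : nat -> R) (l : R) : is_series w l ->
  (forall p, w (S (2*p)) = 0) -> is_series (fun p => w (2*p)%nat) l.
Proof.
  intros H H0.
  assert (E : forall P, sum_n (fun p => w (2*p)%nat) P = sum_n w (2*P)).
  { induction P. reflexivity.
    rewrite sum_Sn, IHP. replace (2 * S P)%nat with (S (S (2*P))) by lia.
    rewrite (sum_Sn w (S (2*P))), (sum_Sn w (2*P)), H0.
    unfold plus; simpl. ring. }
  change (is_lim_seq (sum_n (fun p => w (2*p)%nat)) l).
  apply (is_lim_seq_ext (fun P => sum_n w (2*P))). intro; symmetry; apply E.
  apply (is_lim_seq_subseq (sum_n w) l (fun P => (2*P)%nat)).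
  - intros P [N HN]. exists N. intros n Hn. apply HN. lia.
  - exact H.
Qed.

Lemma pow_m1 (r k : nat) : (1 <= r)%nat ->
  (-1)^(r-1) * (-1)^(S (r + k)) = (-1)^k.
Proof.
  intro Hr. rewrite <- pow_add.
  replace (r - 1 + S (r + k))%nat with (2*r + k)%nat by lia.
  rewrite pow_add, pow_mult. replace ((-1)^2) with 1 by ring. rewrite pow1. ring.
Qed.

Lemma tail_series (r : nat) (y : R) : (2 <= r)%nat -> 0 < y <= 1/2 ->
  is_series (fun p => y^(S (r + 2*p))/INR (S (r+2*p)))
    (-(LogP r y + (-1)^(r-1) * LogP r (-y))/2).
Proof.
  intros Hr Hy.
  pose (u := fun j => y^(S j)/INR (S j)).
  pose (v := fun j => (-y)^(S j)/INR (S j)).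
  assert (Hu : is_series (fun k => u (r + k)%nat) (- LogP r y)).
  { apply is_series_incr_n. lia. unfold LogP. rewrite sum_n_Reals.
    match goal with |- is_series _ ?l => replace l with (- ln (1 - y)) end.
    apply log_series. rewrite Rabs_pos_eq; lra.
    unfold plus, u; simpl. ring. }
  assert (Hv : is_series (fun k => v (r + k)%nat) (- LogP r (-y))).
  { apply is_series_incr_n. lia. unfold LogP. rewrite sum_n_Reals.
    match goal with |- is_series _ ?l => replace l with (- ln (1 - - y)) end.
    apply log_series. rewrite Rabs_Ropp, Rabs_pos_eq; lra.
    unfold plus, v; simpl. ring. }
  pose (s := (-1)^(r-1)).
  assert (Hw := is_series_plus _ _ _ _ Hu (is_series_scal s _ _ Hv)).
  set (w := fun n => plus (u (r + n)%nat) (scal s (v (r + n)%nat))) in Hw.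
  assert (Wk : forall k, w k = u (r + k)%nat * (1 + (-1)^k)).
  { intro k.
    assert (V : v (r+k)%nat = (-1)^(S (r+k)) * u (r+k)%nat).
    { unfold u, v. unfold Rdiv. rewrite <- Rmult_assoc. f_equal.
      rewrite <- Rpow_mult_distr. f_equal. ring. }
    unfold w. rewrite V.
    transitivity (u (r+k)%nat + (s * (-1)^(S (r+k))) * u (r+k)%nat).
    { unfold plus, scal, mult; simpl. unfold mult; simpl. ring. }
    unfold s. rewrite pow_m1 by lia. match goal with |- ?a = ?b => change (@eq R a b) end. ring. }
  apply even_series in Hw.
  2:{ intro p. change (w (S (2*p)) = 0). rewrite Wk.
      match goal with |- ?a = ?b => change (@eq R a b) end.
      replace (S (2*p)) with (2*p+1)%nat by lia.
      rewrite pow_add, pow_mult. replace ((-1)^2) with 1 by ring. rewrite pow1. simpl. ring. }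
  apply (is_series_scal (/2)) in Hw.
  eapply is_series_ext. 2: match type of Hw with is_series _ ?l => replace (-(LogP r y + (-1)^(r-1) * LogP r (-y))/2) with l; [exact Hw|] end.
  - intro p. change (/2 * w (2*p)%nat = y^(S (r + 2*p))/INR (S (r+2*p))). rewrite Wk.
    rewrite pow_mult. replace ((-1)^2) with 1 by ring. rewrite pow1. unfold u.
    match goal with |- ?a = ?b => change (@eq R a b) end. field.
    apply not_0_INR; lia.
  - unfold scal, plus; simpl. unfold mult; simpl. unfold s. field.
Qed.

Definition aT (r : nat) (y : R) (p : nat) : R :=
  y^(2 * S p) / (INR (S p) * (2 * INR (S p) + INR r - 1)).

Definition EE (r : nat) (y : R) : R := LogP r y + (-1)^(r-1) * LogP r (-y).

Lemma G_series (r : nat) (y : R) : (2 <= r)%nat -> 0 < y <= 1/2 ->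
  is_series (aT r y) ((- ln (1 - y^2) + EE r y / y^(r-1)) / INR (r-1)).
Proof.
  intros Hr Hy.
  assert (Hb : is_series (fun j => (y^2)^(S j)/INR (S j)) (- ln (1 - y^2))).
  { apply log_series. rewrite Rabs_pos_eq. nra. nra. }
  assert (Hc := tail_series r y Hr Hy).
  assert (H := is_series_scal (/INR (r-1)) _ _
      (is_series_minus _ _ _ _ Hb (is_series_scal (2/y^(r-1)) _ _ Hc))).
  eapply is_series_ext. 2: match type of H with is_series _ ?l =>
     replace ((- ln (1 - y^2) + EE r y / y^(r-1)) / INR (r-1)) with l; [exact H|] end.
  - intro p. unfold scal, plus, opp, mult; cbn -[pow INR]. unfold aT.
    assert (Hyp : y ^ (r-1) <> 0) by (apply pow_nonzero; lra).
    rewrite <- pow_mult.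
    replace (y ^ S (r + (p + (p + 0)))) with (y^(r-1) * y^(2 * S p)) by (rewrite <- pow_add; f_equal; lia).
    replace (INR (S (r + (p + (p + 0))))) with (INR r + 2 * INR p + 1) by (rewrite S_INR, !plus_INR; simpl; ring).
    replace (INR (r-1)) with (INR r - 1) by (rewrite minus_INR by lia; reflexivity).
    rewrite !S_INR.
    assert (1 < INR r) by (apply lt_1_INR; lia).
    assert (0 <= INR p) by apply pos_INR.
    field. repeat split; lra.
  - unfold scal, plus, opp; simpl. unfold mult; simpl. unfold EE.
    assert (Hyp : y ^ (r-1) <> 0) by (apply pow_nonzero; lra).
    field. split; auto. rewrite minus_INR by lia.
    assert (1 < INR r) by (apply lt_1_INR; lia). simpl; lra.
Qed.

Definition yk (k : nat) : R := / (2 * (2 * INR k + 1)).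

Fixpoint Lt (n : nat) : R := match n with
  | O => 0 | S n => Lt n + ln (1 + / (4 * INR (S n) * INR (S (S n)))) end.
Fixpoint Pk (n : nat) : R := match n with
  | O => 0 | S n => Pk n + ln (1 - (yk n)^2) end.

Lemma yk_bound k : 0 < yk k <= 1/2.
Proof.
  unfold yk. assert (0 <= INR k) by apply pos_INR. split.
  apply Rinv_0_lt_compat; lra.
  rewrite <- (Rinv_inv 2) at 2. replace (1/2) with (/2) by field.
  apply Rinv_le_contravar; lra.
Qed.

Lemma ln_eq a b : a = b -> ln a = ln b.
Proof. intros ->; reflexivity. Qed.

Lemma Pk_id M : 2 * Pk (S M) = Lt (S (2*M)) - Lt M - ln 2.
Proof.
  induction M as [|M IH].
  - cbn [Pk Lt Nat.mul Nat.add]. unfold yk.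
    replace (/ (2 * (2 * INR 0 + 1))) with (1/2) by (simpl; field).
    replace (INR 1) with 1 by reflexivity. replace (INR 2) with 2 by reflexivity.
    replace (1 + / (4 * 1 * 2)) with ((1 - (1/2)^2) * (1 - (1/2)^2) * 2) by field.
    rewrite !ln_mult; try lra.
  - replace (S (2 * S M)) with (S (S (S (2*M)))) by lia.
    change (Pk (S (S M))) with (Pk (S M) + ln (1 - (yk (S M))^2)).
    change (Lt (S (S (S (2*M))))) with (Lt (S (2*M)) + ln (1 + / (4 * INR (S (S (2*M))) * INR (S (S (S (2*M)))))) + ln (1 + / (4 * INR (S (S (S (2*M)))) * INR (S (S (S (S (2*M)))))))).
    change (Lt (S M)) with (Lt M + ln (1 + / (4 * INR (S M) * INR (S (S M))))).
    assert (E : 2 * ln (1 - yk (S M) ^ 2) + ln (1 + / (4 * INR (S M) * INR (S (S M)))) =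
       ln (1 + / (4 * INR (S (S (2*M))) * INR (S (S (S (2*M)))))) + ln (1 + / (4 * INR (S (S (S (2*M)))) * INR (S (S (S (S (2*M)))))))).
    { unfold yk. rewrite !S_INR, mult_INR. simpl (INR 2).
      assert (0 <= INR M) by apply pos_INR.
      set (m := INR M) in *.
      assert (P1 : 0 < 1 - (/ (2 * (2 * (m + 1) + 1))) ^ 2).
      { assert (/ (2 * (2 * (m + 1) + 1)) < 1).
        { apply Rlt_le_trans with (/1); [apply Rinv_lt_contravar; lra| rewrite Rinv_1; lra]. }
        assert (0 < / (2 * (2 * (m + 1) + 1))) by (apply Rinv_0_lt_compat; lra). nra. }
      assert (Q : forall a, 0 < a -> 0 < 1 + / a) by (intros; assert (0 < /a) by (apply Rinv_0_lt_compat; lra); lra).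
      replace (2 * ln (1 - (/ (2 * (2 * (m + 1) + 1))) ^ 2)) with
        (ln ((1 - (/ (2 * (2 * (m + 1) + 1))) ^ 2) * (1 - (/ (2 * (2 * (m + 1) + 1))) ^ 2)))
        by (rewrite ln_mult; auto; ring).

      rewrite <- !ln_mult; auto.
      apply ln_eq. field. repeat split; lra.
      all: try apply Q; try nra.
      all: apply Rmult_lt_0_compat; try apply Q; nra. }
    lra.
Qed.

Lemma ln1p_bound c : 0 < c -> 0 <= ln (1 + c) <= c.
Proof.
  intro Hc. split.
  - rewrite <- ln_1. left. apply ln_increasing; lra.
  - left. rewrite <- (ln_exp c) at 2. apply ln_increasing. lra.
    apply exp_ineq1. lra.
Qed.

Lemma Lt_mono n d : 0 <= Lt (n + d) - Lt n <= / (4 * INR (S n)) - / (4 * INR (S (n + d))).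
Proof.
  induction d as [|d IH].
  - rewrite Nat.add_0_r. split; lra.
  - replace (n + S d)%nat with (S (n + d)) by lia.
    change (Lt (S (n + d))) with (Lt (n + d) + ln (1 + / (4 * INR (S (n + d)) * INR (S (S (n + d)))))).
    assert (0 <= INR (n + d)) by apply pos_INR.
    rewrite !S_INR in *.
    set (k := INR (n + d)) in *.
    assert (Hp : 0 < / (4 * (k + 1) * (k + 1 + 1))) by (apply Rinv_0_lt_compat; nra).
    pose proof (ln1p_bound _ Hp).
    replace (/ (4 * (k + 1 + 1))) with (/ (4 * (k + 1)) - / (4 * (k + 1) * (k + 1 + 1))) by (field; lra).
    lra.
Qed.

Lemma ln_sum_series : is_series (fun k => ln (1 - (yk k)^2)) (- ln 2 / 2).
Proof.
  change (is_lim_seq (sum_n (fun k => ln (1 - (yk k)^2))) (- ln 2 / 2)).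
  assert (E : forall M, sum_n (fun k => ln (1 - (yk k)^2)) M = Pk (S M)).
  { induction M. rewrite sum_O. simpl. ring.
    rewrite sum_Sn, IHM. reflexivity. }
  apply is_lim_seq_ext with (u := fun M => Pk (S M)). intro; symmetry; apply E.
  apply is_lim_seq_le_le with (u := fun M => - ln 2 / 2)
     (w := fun M => - ln 2 / 2 + / (8 * INR (S M))).
  - intro M. pose proof (Pk_id M) as HP.
    pose proof (Lt_mono M (S M)) as HL.
    replace (M + S M)%nat with (S (2 * M)) in HL by lia.
    replace (INR (S (S (2 * M)))) with (2 * INR (S M)) in HL by (rewrite !S_INR, mult_INR; simpl; ring).
    assert (0 < INR (S M)) by (apply lt_0_INR; lia).
    replace (/ (4 * INR (S M)) - / (4 * (2 * INR (S M)))) with (/ (8 * INR (S M))) in HL by (field; lra).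
    lra.
  - apply is_lim_seq_const.
  - replace (Finite (- ln 2 / 2)) with (Finite (- ln 2 / 2 + 0)) by (f_equal; ring).
    apply is_lim_seq_plus'. apply is_lim_seq_const.
    apply (is_lim_seq_ext (fun M => / 8 * / INR (S M))).
    { intro M. rewrite Rinv_mult. reflexivity. }
    replace (Finite 0) with (Rbar_mult (/8) 0) by (simpl; f_equal; ring).
    apply is_lim_seq_scal_l.
    replace (Finite 0) with (Rbar_inv p_infty) by reflexivity.
    apply is_lim_seq_inv. 2: discriminate.
    apply (is_lim_seq_incr_1 INR). apply is_lim_seq_INR.
Qed.

Lemma sum_n_nonneg (b : nat -> R) N : (forall n, 0 <= b n) -> 0 <= sum_n b N.
Proof.
  intro H. induction N. rewrite sum_O. apply H.
  rewrite sum_Sn. unfold plus; simpl. pose proof (H (S N)). lra.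
Qed.

Lemma ps_le (b : nat -> R) (l : R) : (forall n, 0 <= b n) -> is_series b l ->
  forall N, sum_n b N <= l.
Proof.
  intros H Hs N. apply (is_lim_seq_incr_compare (sum_n b) l Hs).
  intro n. rewrite sum_Sn. unfold plus; simpl. pose proof (H (S n)). lra.
Qed.

Lemma term_le (b : nat -> R) N : (forall n, 0 <= b n) -> b N <= sum_n b N.
Proof.
  intro H. destruct N. rewrite sum_O; lra.
  rewrite sum_Sn. unfold plus; simpl. pose proof (sum_n_nonneg b N H). lra.
Qed.

Lemma series_nonneg (b : nat -> R) (l : R) : (forall n, 0 <= b n) -> is_series b l -> 0 <= l.
Proof.
  intros H Hs. pose proof (sum_n_nonneg b 0 H). pose proof (ps_le b l H Hs 0). lra.
Qed.

Lemma fin_swap (b : nat -> nat -> R) K : (forall i, ex_series (b i)) ->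
  ex_series (fun p => sum_n (fun i => b i p) K) /\
  Series (fun p => sum_n (fun i => b i p) K) = sum_n (fun i => Series (b i)) K.
Proof.
  intro H. induction K as [|K [IH1 IH2]].
  - rewrite sum_O. split. apply (ex_series_ext (b 0%nat)). intro; rewrite sum_O; reflexivity. apply H.
    apply Series_ext. intro; rewrite sum_O; reflexivity.
  - assert (E : forall p, sum_n (fun i => b i p) (S K) = sum_n (fun i => b i p) K + b (S K) p).
    { intro p. rewrite sum_Sn. reflexivity. }
    split.
    + apply (ex_series_ext (fun p => plus (sum_n (fun i => b i p) K) (b (S K) p))).
      intro; rewrite E; reflexivity.
      apply (@ex_series_plus R_AbsRing R_NormedModule (fun p => sum_n (fun i => b i p) K) (b (S K))). exact IH1. apply H.
    + rewrite (Series_ext _ _ E). rewrite Series_plus; auto.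
      rewrite IH2, sum_Sn. reflexivity.
Qed.

Lemma fubini (a : nat -> nat -> R) (G : nat -> R) (Sm : R) :
  (forall k p, 0 <= a k p) -> (forall k, is_series (a k) (G k)) -> is_series G Sm ->
  (forall p, ex_series (fun k => a k p)) /\ is_series (fun p => Series (fun k => a k p)) Sm.
Proof.
  intros Ha HG HS.
  assert (G0 : forall k, 0 <= G k) by (intro k; exact (series_nonneg _ _ (Ha k) (HG k))).
  assert (psG : forall k P, sum_n (a k) P <= G k) by (intros; apply ps_le; auto).
  assert (aG : forall k p, a k p <= G k).
  { intros. eapply Rle_trans. apply term_le. apply Ha. apply psG. }
  assert (exG : ex_series G) by (exists Sm; exact HS).
  assert (exa : forall p, ex_series (fun k => a k p)).
  { intro p. apply (@ex_series_le R_AbsRing R_CompleteNormedModule _ G); auto.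
    intro k. change (Rabs (a k p) <= G k). rewrite Rabs_pos_eq; auto. }
  split; [exact exa|].
  set (H := fun p => Series (fun k => a k p)).
  assert (H0 : forall p, 0 <= H p).
  { intro p. apply (series_nonneg (fun k => a k p)). auto. apply Series_correct, exa. }
  assert (swap1 : forall P, sum_n H P = Series (fun k => sum_n (a k) P)).
  { intro P. destruct (fin_swap (fun p k => a k p) P exa) as [_ E]. symmetry. exact E. }
  assert (Hb : forall P, sum_n H P <= Sm).
  { intro P. rewrite swap1. rewrite <- (is_series_unique G Sm HS).
    apply Series_le; auto. intro k. split. apply sum_n_nonneg; auto. apply psG. }
  assert (Hinc : forall n, sum_n H n <= sum_n H (S n)).
  { intro n. rewrite (sum_Sn H n). unfold plus; simpl. pose proof (H0 (S n)). lra. }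
  destruct (ex_lim_seq_incr _ Hinc) as [l Hl].
  assert (L1 := is_lim_seq_le _ _ _ _ Hb Hl (is_lim_seq_const Sm)).
  assert (L2 := is_lim_seq_le (fun _ => 0) (sum_n H) 0 l (fun n => sum_n_nonneg H n H0) (is_lim_seq_const 0) Hl).
  destruct l as [l| |]; simpl in L1, L2; try contradiction.
  assert (HH : is_series H l) by exact Hl.
  assert (psH : forall p K, sum_n (fun k => a k p) K <= H p).
  { intros. apply ps_le. auto. apply Series_correct, exa. }
  assert (Hle : Sm <= l).
  { assert (L3 := is_lim_seq_le (sum_n G) (fun _ => l) Sm l).
    simpl in L3. apply L3. 2: exact HS. 2: apply is_lim_seq_const.
    intro K.
    destruct (fin_swap a K (fun k => ex_intro _ _ (HG k))) as [_ E].
    replace (sum_n G K) with (sum_n (fun i => Series (a i)) K).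
    2:{ apply sum_n_ext. intro; apply is_series_unique, HG. }
    rewrite <- E. rewrite <- (is_series_unique H l HH).
    apply Series_le. 2: exists l; exact HH.
    intro p. split. apply sum_n_nonneg; intro; apply Ha. apply psH. }
  replace Sm with l by lra. exact HH.
Qed.

Lemma aT_nonneg r y p : (2 <= r)%nat -> 0 < y -> 0 <= aT r y p.
Proof.
  intros Hr Hy. unfold aT. rewrite !S_INR.
  assert (1 < INR r) by (apply lt_1_INR; lia). assert (0 <= INR p) by apply pos_INR.
  apply Rmult_le_pos. apply pow_le; lra. left; apply Rinv_0_lt_compat. nra.
Qed.

Lemma Gk_bound r y : (2 <= r)%nat -> 0 < y <= 1/2 ->
  Series (aT r y) <= - ln (1 - y^2).
Proof.
  intros Hr Hy.
  assert (Hb : is_series (fun j => (y^2)^(S j)/INR (S j)) (- ln (1 - y^2))).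
  { apply log_series. rewrite Rabs_pos_eq. nra. nra. }
  rewrite <- (is_series_unique _ _ Hb). apply Series_le. 2: eexists; exact Hb.
  intro p. split. apply aT_nonneg; [lia|lra].
  unfold aT. rewrite <- pow_mult. rewrite !S_INR.
  assert (1 < INR r) by (apply lt_1_INR; lia). assert (0 <= INR p) by apply pos_INR.
  assert (0 <= y^(2 * S p)) by (apply pow_le; nra).
  unfold Rdiv. apply Rmult_le_compat_l; auto.
  apply Rinv_le_contravar. lra. nra.
Qed.

Theorem corollary2p9 (r : nat) (hr : (2 <= r)%nat) :
  logC r (1 / 4) =
  (1 / 4) ^ (r - 1) *
    (- (1 / 2) * ln 2 +
     INR (r - 1) *
       Series (fun k : nat =>
         let n := S k in
         lambda (2 * n) /
           (INR n * (2 * INR n + INR r - 1) * 2 ^ (2 * n)))).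
Proof.
  set (Gk := fun k => Series (aT r (yk k))).
  assert (Hr1 : INR (r - 1) = INR r - 1) by (rewrite minus_INR by lia; reflexivity).
  assert (Hr2 : 1 < INR r) by (apply lt_1_INR; lia).
  assert (HA : forall k,
    (let n := 2 * INR k + 1 in
     (n / 2) ^ (r - 1) *
      (LogP r (2 * (1/4) / n) + (-1) ^ (r - 1) * LogP r (- (2 * (1/4) / n)))) =
    (1/4)^(r-1) * (INR (r-1) * Gk k + ln (1 - (yk k)^2))).
  { intro k. cbv zeta.
    assert (0 <= INR k) by apply pos_INR.
    replace (2 * (1/4) / (2 * INR k + 1)) with (yk k) by (unfold yk; field; lra).
    replace ((2 * INR k + 1) / 2) with ((1/4) / yk k) by (unfold yk; field; lra).
    pose proof (yk_bound k) as Hy.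
    assert (HG := G_series r (yk k) hr Hy).
    unfold Gk. rewrite (is_series_unique _ _ HG).
    fold (EE r (yk k)).
    assert (Hyp : yk k ^ (r-1) <> 0) by (apply pow_nonzero; lra).
    unfold Rdiv. rewrite Rpow_mult_distr, pow_inv. field. split; auto. lra. }
  assert (Hex : ex_series Gk).
  { apply (@ex_series_le R_AbsRing R_CompleteNormedModule _ (fun k => - ln (1 - (yk k)^2))).
    - intro k. change (Rabs (Gk k) <= - ln (1 - (yk k)^2)).
      pose proof (yk_bound k) as Hy.
      rewrite Rabs_pos_eq. apply Gk_bound; auto.
      unfold Gk. apply (series_nonneg (aT r (yk k))). intro; apply aT_nonneg; [lia|lra].
      apply Series_correct. eexists. apply G_series; auto.
    - exists (- (- ln 2 / 2)).
      apply (is_series_ext (fun k => scal (-1) (ln (1 - (yk k)^2)))).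
      intro; unfold scal; simpl; unfold mult; simpl; ring.
      replace (- (- ln 2 / 2)) with (scal (-1) (- ln 2 / 2)) by (unfold scal; simpl; unfold mult; simpl; ring).
      apply (@is_series_scal R_AbsRing R_NormedModule), ln_sum_series. }
  set (Sm := Series Gk).
  assert (HSm : is_series Gk Sm) by (apply Series_correct, Hex).
  destruct (fubini (fun k p => aT r (yk k) p) Gk Sm) as [_ HF].
  { intros k p. apply aT_nonneg. lia. apply yk_bound. }
  { intro k. apply Series_correct. eexists. apply G_series; auto. apply yk_bound. }
  { exact HSm. }
  assert (HR : Series (fun k : nat =>
         let n := S k in
         lambda (2 * n) /
           (INR n * (2 * INR n + INR r - 1) * 2 ^ (2 * n))) = Sm).
  { rewrite <- (is_series_unique _ _ HF). apply Series_ext. intro p. cbv zeta.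
    unfold lambda. unfold Rdiv at 1. rewrite <- Series_scal_r. apply Series_ext. intro k.
    unfold aT, yk. assert (0 <= INR k) by apply pos_INR.
    assert (0 <= INR p) by apply pos_INR.
    rewrite pow_inv, Rpow_mult_distr. rewrite !S_INR.
    assert (Q1 : 2 ^ (2 * S p) <> 0) by (apply pow_nonzero; lra).
    assert (Q2 : (2 * INR k + 1) ^ (2 * S p) <> 0) by (apply pow_nonzero; lra).
    field. repeat split; auto; nra. }
  rewrite HR.
  unfold logC.
  erewrite Series_ext. 2:{ intro k. exact (HA k). }
  apply is_series_unique.
  replace ((1 / 4) ^ (r - 1) * (- (1 / 2) * ln 2 + INR (r - 1) * Sm)) with
    (scal ((1/4)^(r-1)) (plus (scal (INR (r-1)) Sm) (- ln 2 / 2)))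
    by (unfold scal, plus; simpl; unfold mult, plus; simpl; field).
  apply (is_series_ext (fun k => scal ((1/4)^(r-1)) (plus (scal (INR (r-1)) (Gk k)) (ln (1 - (yk k)^2))))).
  { intro; unfold scal, plus; simpl; unfold mult, plus; simpl; ring. }
  apply (@is_series_scal R_AbsRing R_NormedModule). apply (@is_series_plus R_AbsRing R_NormedModule). apply (@is_series_scal R_AbsRing R_NormedModule). exact HSm.
  apply ln_sum_series.
Qed.
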